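(* For every $n\ge1$, there is a bijection between the set of walks of length $2n-2$ in the path graph $P_7$ that start and end at the middle vertex $v_4$ and the set of rectangular permutations in $S_n$.
   Context: $P_7$ is the path graph with vertices $v_1,\dots,v_7$ and edges $v_iv_{i+1}$ for $1\le i\le 6$. A walk of length $\ell$ is a sequence of vertices $w_0,w_1,\dots,w_\ell$ with $w_{j-1}$ and $w_j$ adjacent for all $j$. A permutation is rectangular if it avoids the patterns $2413$, $2431$, $4213$ and $4231$. *)

(* Defs.v *)
From mathcomp Require Import all_boot all_order all_fingroup.
Set Implicit Arguments. Unset Strict Implicit. Unset Printing Implicit Defensive.

(* Vertices of P_7: v_1,...,v_7 are represented by 0,...,6 : 'I_7,
   i.e. v_i is the ordinal of value i-1.  Edges: v_i v_(i+1). *)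
Definition P7_adj (a b : 'I_7) : bool := (a.+1 == b :> nat) || (b.+1 == a :> nat).

Definition v4 : 'I_7 := inord 3.

(* A walk of length l is a sequence w_0, ..., w_l of vertices, encoded as a
   finite function 'I_l.+1 -> 'I_7, with consecutive vertices adjacent. *)
Definition is_walk (l : nat) (w : {ffun 'I_l.+1 -> 'I_7}) : bool :=
  [forall j : 'I_l, P7_adj (w (widen_ord (leqnSn l) j)) (w (lift ord0 j))].

Definition closed_walk_v4 (l : nat) (w : {ffun 'I_l.+1 -> 'I_7}) : bool :=
  [&& is_walk w, w ord0 == v4 & w ord_max == v4].

(* Classical pattern containment: s : S_n contains the pattern p
   (a permutation of {1..k} written in one-line notation as a list)
   if there are positions f 0 < ... < f (k-1) whose values are
   order-isomorphic to p. *)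
Definition contains_pattern (n : nat) (s : 'S_n) (p : seq nat) : bool :=
  [exists f : {ffun 'I_(size p) -> 'I_n},
     [forall a : 'I_(size p), forall b : 'I_(size p),
        (a < b) ==> (f a < f b)] &&
     [forall a : 'I_(size p), forall b : 'I_(size p),
        (s (f a) < s (f b)) == (nth 0 p a < nth 0 p b)]].

Definition avoids (n : nat) (s : 'S_n) (p : seq nat) : bool :=
  ~~ contains_pattern s p.

Definition rectangular (n : nat) (s : 'S_n) : bool :=
  [&& avoids s [:: 2; 4; 1; 3], avoids s [:: 2; 4; 3; 1],
      avoids s [:: 4; 2; 1; 3] & avoids s [:: 4; 2; 3; 1]].

(* Main.v *)
Require Import Defs.
From mathcomp Require Import all_boot all_order all_fingroup.
From mathcomp Require Import zify.
Set Implicit Arguments. Unset Strict Implicit. Unset Printing Implicit Defensive.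

Fixpoint orders_rec (k : nat) (C : seq nat) : seq (seq nat) :=
  if k is k'.+1 then flatten [seq map (cons x) (orders_rec k' (rem x C)) | x <- C]
  else [:: [::]].
Definition orders (C : seq nat) := orders_rec (size C) C.

Lemma mem_orders_rec k C v : size C = k -> (v \in orders_rec k C) = perm_eq v C.
Proof.
elim: k C v => [|k IH] C v /=.
  move/size0nil=> ->; rewrite inE; case: v => [|x v] //=.
  by apply/esym/negbTE; apply/negP => /perm_size.
move=> hs; apply/flatten_mapP/idP.
  case=> x xC /mapP [v' v'in ->].
  rewrite IH in v'in; last by rewrite size_rem // hs.
  apply: (@perm_trans _ (x :: rem x C)); first by rewrite perm_cons.
  by rewrite perm_sym perm_to_rem.
case: v => [|x v] hp.
  by move/perm_size: hp; rewrite hs.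
have xC : x \in C by rewrite -(perm_mem hp) mem_head.
exists x => //; apply/mapP; exists v => //.
rewrite IH; last by rewrite size_rem // hs.
have := perm_trans hp (perm_to_rem xC); by rewrite perm_cons.
Qed.

Lemma mem_orders C v : (v \in orders C) = perm_eq v C.
Proof. exact: mem_orders_rec. Qed.

Lemma uniq_orders_rec k C : uniq C -> uniq (orders_rec k C).
Proof.
elim: k C => [|k IH] C uC //=.
have : forall D, uniq D -> {subset D <= C} ->
  uniq (flatten [seq [seq x :: i | i <- orders_rec k (rem x C)] | x <- D]).
  elim=> [|y D IHD] //= /andP [yD uD] sub.
  rewrite cat_uniq IHD ?andbT //; last by move=> z zD; apply: sub; rewrite inE zD orbT.
  rewrite map_inj_uniq ?IH ?rem_uniq //=; last by move=> a b [].
  apply/hasPn => w /flatten_mapP [z zD /mapP [w' _ ->]].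
  apply/mapP => -[w'' _ [ezy _]]; by rewrite -ezy zD in yD.
by move=> H; apply: H.
Qed.

Lemma uniq_orders C : uniq C -> uniq (orders C).
Proof. exact: uniq_orders_rec. Qed.

Lemma size_orders_rec k C : size C = k -> size (orders_rec k C) = k`!.
Proof.
elim: k C => [|k IH] C //= hs.
rewrite size_flatten /shape -map_comp.
have key : forall D, {subset D <= C} ->
  [seq (size \o (fun x => [seq x :: i | i <- orders_rec k (rem x C)])) i | i <- D]
  = nseq (size D) k`!.
  elim=> [|y D IHD] //= sub.
  rewrite IHD; last by move=> z zD; apply: sub; rewrite inE zD orbT.
  rewrite size_map IH // size_rem ?hs //; apply: sub; exact: mem_head.
rewrite key // factS hs; elim: k.+1 => [|m IHm] //=; by rewrite IHm mulSn.
Qed.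
Definition bad n (C : seq nat) : bool :=
  [exists c1 : 'I_n, exists a : 'I_n, exists d : 'I_n, exists b : 'I_n,
    [&& c1 < a, a < d, d < b, (c1:nat) \in C, (a:nat) \notin C, (d:nat) \in C
      & (b:nat) \notin C]].

Lemma badP n C : reflect (exists c1 a d b : nat, [/\ c1 < a, a < d, d < b, b < n &
   [/\ c1 \in C, a \notin C, d \in C & b \notin C]]) (bad n C).
Proof.
apply: (iffP existsP).
  case=> c1 /existsP [a /existsP [d /existsP [b /and5P [h1 h2 h3 h4 /and3P [h5 h6 h7]]]]].
  by exists c1, a, d, b; split.
case=> c1 [a [d [b [h1 h2 h3 h4 [h5 h6 h7 h8]]]]].
have hc : c1 < n by lia.
have ha : a < n by lia.
have hd : d < n by lia.
exists (Ordinal hc); apply/existsP; exists (Ordinal ha); apply/existsP; exists (Ordinal hd).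
apply/existsP; exists (Ordinal h4); by rewrite /= h1 h2 h3 h5 h6 h7 h8.
Qed.

Lemma bad_mem n C C' : C =i C' -> bad n C = bad n C'.
Proof.
move=> e; apply/badP/badP; case=> c1 [a [d [b [h1 h2 h3 h4 [h5 h6 h7 h8]]]]];
  exists c1, a, d, b; (split => //; split); by rewrite ?e // -?e.
Qed.

Lemma bad_nil n : bad n [::] = false.
Proof. by apply/badP => -[c1 [a [d [b [_ _ _ _ []]]]]]. Qed.

Fixpoint goodC n v := ~~ bad n v && (if v is _ :: v' then goodC n v' else true).
Definition cnt n C := count (goodC n) (orders C).

Lemma orders_rec_S k C : orders_rec k.+1 C = flatten [seq map (cons x) (orders_rec k (rem x C)) | x <- C].
Proof. by []. Qed.

Lemma cnt_rec n C : cnt n C =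
  if bad n C then 0 else (if C is [::] then 1 else \sum_(x <- C) cnt n (rem x C)).
Proof.
case: C => [|y C'] ; first by rewrite /cnt /= bad_nil.
rewrite /cnt /orders (_ : size (y :: C') = (size C').+1) // orders_rec_S.
set C := y :: C'.
have hsz : forall x, x \in C -> size (rem x C) = size C' by move=> x xC; rewrite size_rem.
have hb' : forall x v, x \in C -> v \in orders_rec (size C') (rem x C) -> bad n (x :: v) = bad n C.
  move=> x v xC vin; apply: bad_mem; apply: perm_mem.
  rewrite -[orders_rec _ _](_ : orders (rem x C) = _) in vin; last by rewrite /orders hsz.
  rewrite mem_orders in vin.
  apply: (@perm_trans _ (x :: rem x C)); first by rewrite perm_cons.
  by rewrite perm_sym perm_to_rem.
rewrite count_flatten -map_comp sumnE big_map.
case: ifP => hb.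
  apply: big1_seq => x /andP [_ xC]; rewrite /comp count_map; apply/eqP; rewrite -leqn0 leqNgt -has_count.
  apply/hasP => -[v vin]; rewrite /preim /= => /andP [] /negP []; by rewrite hb' // hb.
apply: eq_big_seq => x xC; rewrite /comp count_map hsz //.
apply: eq_in_count => v vin; rewrite /preim /= hb' // hb //.
Qed.

Lemma cnt_perm n C C' : uniq C -> uniq C' -> C =i C' -> cnt n C = cnt n C'.
Proof.
move=> u u' e; rewrite /cnt.
have hp : perm_eq (orders C) (orders C').
  apply: uniq_perm; rewrite ?uniq_orders //.
  have h0 := uniq_perm u u' e.
  move=> v; rewrite !mem_orders; apply/idP/idP => h.
    exact: perm_trans h h0.
  by apply: perm_trans h _; rewrite perm_sym.
by move/seq.permP: hp => ->.
Qed.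
Fixpoint st (N : nat) : nat * (nat -> nat) :=
  match N with
  | 0 => (1, fun _ => 1)
  | N'.+1 => let p := st N' in
    let f' := if N' == 0 then 1 else p.1 + 2 ^ N'.-1 + \sum_(1 <= j < N') p.2 j in
    (f', fun a => if a == 0 then f' else if a == N'.+1 then 2 ^ N'
                  else (if a == 1 then 1 else 2) * p.2 a.-1 + p.2 a)
  end.
Definition Fn N := (st N).1.
Definition hn N a := (st N).2 a.

Lemma Fn0 : Fn 0 = 1. Proof. by []. Qed.
Lemma FnS N : Fn N.+1 = if N == 0 then 1 else Fn N + 2 ^ N.-1 + \sum_(1 <= j < N) hn N j.
Proof. by []. Qed.
Lemma hn0 N : hn N 0 = Fn N.
Proof. by case: N. Qed.
Lemma hnS N a : hn N.+1 a = if a == 0 then Fn N.+1 else if a == N.+1 then 2 ^ N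
                  else (if a == 1 then 1 else 2) * hn N a.-1 + hn N a.
Proof. by []. Qed.

Definition Psi a b g := if a == 0 then Fn b else if g == 0 then Fn (a + b) else hn (a + b) a.

Definition shp p q c n := iota p (q - p) ++ iota c (n - c).

Lemma mem_shp p q c n x : (x \in shp p q c n) = (p <= x < q) || (c <= x < n).
Proof. rewrite mem_cat !mem_iota; apply/orP/orP; case=> h; (left; lia) || (right; lia). Qed.

Lemma uniq_shp p q c n : q <= c -> uniq (shp p q c n).
Proof.
move=> h; rewrite cat_uniq !iota_uniq /= andbT; apply/hasPn => x; rewrite !mem_iota => hx.
lia.
Qed.

Lemma good_shp p q c n : q <= c -> c <= n -> bad n (shp p q c n) = false.
Proof.
move=> h1 h2; apply/badP => -[c1 [a [d [b [e1 e2 e3 e4 []]]]]]; rewrite !mem_shp; lia.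
Qed.
Lemma cnt_rec' n C : C != [::] -> bad n C = false -> cnt n C = \sum_(x <- C) cnt n (rem x C).
Proof. by move=> h hb; rewrite cnt_rec hb; case: C h hb. Qed.

Lemma cnt_bad n C : bad n C -> cnt n C = 0.
Proof. by move=> hb; rewrite cnt_rec hb. Qed.

Lemma cnt_nil n : cnt n [::] = 1.
Proof. by rewrite cnt_rec bad_nil. Qed.

Lemma sum_iota_first (f : nat -> nat) p a : 1 <= a ->
  \sum_(x <- iota p a) f x = f p + \sum_(x <- iota p.+1 (a - 1)) f x.
Proof. by case: a => [|a] //= _; rewrite big_cons subn1. Qed.

Lemma sum_iota_ends (f : nat -> nat) p a : 2 <= a ->
  \sum_(x <- iota p a) f x = f p + \sum_(x <- iota p.+1 (a - 2)) f x + f (p + a - 1).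
Proof.
move=> ha; rewrite sum_iota_first; last lia.
rewrite (_ : a - 1 = (a - 2) + 1); last lia.
rewrite iotaD big_cat /= big_cons big_nil addn0 addnA; congr (_ + _ + f _); lia.
Qed.

Lemma sum0_iota (f : nat -> nat) s m : (forall x, s <= x < s + m -> f x = 0) ->
  \sum_(x <- iota s m) f x = 0.
Proof. move=> h; apply: big1_seq => x /andP [_]; rewrite mem_iota; exact: h. Qed.

Definition IHt n k := forall p q c, p <= q -> q <= c -> c <= n -> q - p + (n - c) = k ->
  cnt n (shp p q c n) = Psi (q - p) (n - c) (c - q).

Lemma rc_gen n k C x p' q' c' : IHt n k -> uniq C -> p' <= q' -> q' <= c' -> c' <= n ->
  q' - p' + (n - c') = k ->
  (forall y, (y \in C) && (y != x) = (p' <= y < q') || (c' <= y < n)) ->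
  cnt n (rem x C) = Psi (q' - p') (n - c') (c' - q').
Proof.
move=> IH uC h1 h2 h3 hk hm; rewrite -IH //; apply: cnt_perm; rewrite ?rem_uniq ?uniq_shp //.
by move=> y; rewrite mem_rem_uniq // inE mem_shp andbC hm.
Qed.

Lemma Fcase n k s : IHt n k -> s <= n -> n - s = k.+1 -> cnt n (iota s (n - s)) = Fn k.+1.
Proof.
move=> IH hs hm.
have uC := iota_uniq s (n - s).
have bC : bad n (iota s (n - s)) = false.
  apply/badP => -[c1 [a [d [b [e1 e2 e3 e4 []]]]]]; rewrite !mem_iota; lia.
rewrite cnt_rec' //; last by rewrite hm.
case: k IH hm => [|k] IH hm.
  by rewrite hm big_cons big_nil /= eqxx cnt_nil.
set C := iota s (n - s).
have eC : C = iota s k.+2 by rewrite /C hm.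
rewrite {1}eC sum_iota_ends // FnS.
rewrite (@rc_gen n k.+1 _ s s.+1 n n) //; try lia; last first.
  move=> y; rewrite mem_iota; apply/idP/idP => /=; lia.
rewrite (@rc_gen n k.+1 _ (s + k.+2 - 1) s (n - 1) n) //; try lia; last first.
  move=> y; rewrite mem_iota; apply/idP/idP => /=; lia.
rewrite /Psi (_ : n - s.+1 == 0 = false); last lia.
rewrite (_ : n - 1 - s == 0 = false); last lia.
rewrite (_ : n - s.+1 + (n - n) = k.+1); last lia.
rewrite (_ : n - 1 - s + (n - n) = k.+1); last lia.
rewrite (_ : n - n == 0); last lia.
rewrite (_ : n - (n - 1) == 0 = false); last lia.
rewrite (_ : n - 1 - s = k.+1); last lia.
rewrite hnS /= eqxx.
have -> : \sum_(x <- iota s.+1 (k.+2 - 2)) cnt n (rem x C)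
        = \sum_(1 <= j < k.+1) hn k.+1 j.
  rewrite /index_iota (_ : k.+2 - 2 = k.+1 - 1); last lia.
  rewrite (_ : s.+1 = s + 1); last lia.
  rewrite iotaDl big_map; apply: eq_big_seq => j; rewrite mem_iota => hj.
  rewrite (@rc_gen n k.+1 _ (s + j) s (s + j) (s + j).+1) //; try lia; last first.
    move=> y; rewrite mem_iota; apply/idP/idP => /=; lia.
  rewrite /Psi (_ : s + j - s == 0 = false); last lia.
  rewrite (_ : (s + j).+1 - (s + j) == 0 = false); last lia.
  congr hn; lia.
lia.
Qed.
Lemma hn_diag k : hn k.+1 k.+1 = 2 ^ k.
Proof. by rewrite hnS eqxx. Qed.

Ltac memt := move=> y; rewrite ?mem_shp ?mem_iota; apply/idP/idP => /=; lia.

Lemma Gcase n k p q : IHt n k -> p < q -> q < n -> q - p = k.+1 ->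
  cnt n (shp p q n n) = 2 ^ k.
Proof.
move=> IH h1 h2 hk.
set C := shp p q n n.
have uC : uniq C by apply: uniq_shp; lia.
have bC : bad n C = false by apply: good_shp; lia.
rewrite cnt_rec' //; last first.
  by apply/eqP => E; move: (congr1 size E); rewrite /C /shp size_cat !size_iota /=; lia.
rewrite {1}/C /shp big_cat subnn big_nil /= addn0 hk.
case: k IH hk => [|k] IH hk.
  rewrite big_cons big_nil addn0 (@rc_gen n 0 _ p q q n) //; try lia; last by memt.
  by rewrite /Psi !subnn.
rewrite sum_iota_ends //.
rewrite (@rc_gen n k.+1 _ p p.+1 q n) //; try lia; last by memt.
rewrite (@rc_gen n k.+1 _ (p + k.+2 - 1) p (q - 1) n) //; try lia; last by memt.
rewrite sum0_iota; last first.
  move=> x hx; apply: cnt_bad; apply/badP; exists p, x, x.+1, q.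
  rewrite !mem_rem_uniq // !inE !mem_shp; split; try lia; split; lia.
rewrite /Psi (_ : q - p.+1 == 0 = false); last lia.
rewrite (_ : q - 1 - p == 0 = false); last lia.
rewrite (_ : n - q == 0 = false); last lia.
rewrite (_ : n - (q - 1) == 0 = false); last lia.
rewrite (_ : q - p.+1 + (n - n) = k.+1); last lia.
rewrite (_ : q - 1 - p + (n - n) = k.+1); last lia.
rewrite (_ : q - p.+1 = k.+1); last lia.
rewrite (_ : q - 1 - p = k.+1); last lia.
rewrite hn_diag expnS; lia.
Qed.

Lemma Hcase n k p q c : IHt n k -> p < q -> q < c -> c < n -> q - p + (n - c) = k.+1 ->
  cnt n (shp p q c n) = hn k.+1 (q - p).
Proof.
move=> IH h1 h2 h3 hk.
set C := shp p q c n.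
have uC : uniq C by apply: uniq_shp; lia.
have bC : bad n C = false by apply: good_shp; lia.
rewrite cnt_rec'; last by [].
  2: by apply/eqP => E; move: (congr1 size E); rewrite /C /shp size_cat !size_iota /=; lia.
rewrite {1}/C /shp big_cat /=.
rewrite (@sum_iota_first _ c); last lia.
rewrite (@rc_gen n k _ c p q c.+1) //; try lia; last by memt.
rewrite (sum0_iota (s := c.+1)); last first.
  move=> x hx; apply: cnt_bad; apply/badP; exists p, q, c, x.
  rewrite !mem_rem_uniq // !inE !mem_shp; split; try lia; split; lia.
rewrite hnS.
rewrite (_ : q - p == 0 = false); last lia.
rewrite (_ : q - p == k.+1 = false); last lia.
have eP : Psi (q - p) (n - c.+1) (c.+1 - q) = hn k (q - p).
  rewrite /Psi (_ : q - p == 0 = false); last lia.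
  rewrite (_ : c.+1 - q == 0 = false); last lia.
  congr hn; lia.
rewrite eP; congr (_ + _).
case E: (q - p) => [|a]; first lia.
case: a E => [|a] E.
  rewrite (_ : q - p = 1) in hk; last lia.
  rewrite big_cons big_nil /= addn0 (@rc_gen n k _ p q q c) //; try lia; last by memt.
  rewrite mul1n hn0 /Psi subnn eqxx; congr Fn; lia.
rewrite sum_iota_ends; last lia.
rewrite (@rc_gen n k _ p p.+1 q c) //; try lia; last by memt.
rewrite (@rc_gen n k _ (p + a.+2 - 1) p (q - 1) c) //; try lia; last by memt.
rewrite sum0_iota; last first.
  move=> x hx; apply: cnt_bad; apply/badP; exists p, x, x.+1, q.
  rewrite !mem_rem_uniq // !inE !mem_shp; split; try lia; split; lia.
rewrite /Psi (_ : q - p.+1 == 0 = false); last lia.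
rewrite (_ : q - 1 - p == 0 = false); last lia.
rewrite (_ : c - q == 0 = false); last lia.
rewrite (_ : c - (q - 1) == 0 = false); last lia.
rewrite (_ : q - p.+1 + (n - c) = k); last lia.
rewrite (_ : q - 1 - p + (n - c) = k); last lia.
rewrite (_ : q - p.+1 = a.+1); last lia.
rewrite (_ : q - 1 - p = a.+1); last lia.
  rewrite /=; lia.
by rewrite addn0.
Qed.

Lemma main_shape n k : IHt n k.
Proof.
elim: k => [|k IH] p q c h1 h2 h3 hk.
  rewrite /shp (_ : q - p = 0); last lia.
  rewrite (_ : n - c = 0); last lia.
  by rewrite /= cnt_nil /Psi eqxx.
have uC : uniq (shp p q c n) by apply: uniq_shp.
case: (eqVneq p q) => [epq|npq].
  subst q; rewrite (@cnt_perm n _ (iota c (n - c))) ?iota_uniq //; last by memt.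
  rewrite (@Fcase n k) //; try lia.
  by rewrite /Psi subnn eqxx; congr Fn; lia.
case: (eqVneq q c) => [eqc|nqc].
  subst c; rewrite (@cnt_perm n _ (iota p (n - p))) ?iota_uniq //; last by memt.
  rewrite (@Fcase n k) //; try lia.
  rewrite /Psi subnn eqxx  (_ : q - p == 0 = false); last lia.
  congr Fn; lia.
case: (eqVneq c n) => [ecn|ncn].
  subst c; rewrite (@Gcase n k) //; try lia.
  rewrite /Psi (_ : q - p == 0 = false); last lia.
  rewrite (_ : n - q == 0 = false); last lia.
  rewrite (_ : q - p + (n - n) = k.+1); last lia.
  rewrite (_ : q - p = k.+1); last lia.
  by rewrite hn_diag.
rewrite (@Hcase n k) //; try lia.
rewrite /Psi (_ : q - p == 0 = false); last lia.
rewrite (_ : c - q == 0 = false); last lia.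
by rewrite hk.
Qed.

Lemma cnt_iota n : 1 <= n -> cnt n (iota 0 n) = Fn n.
Proof.
move=> hn.
rewrite (_ : iota 0 n = shp 0 n n n); last by rewrite /shp subn0 subnn cats0.
rewrite (@main_shape n n) //; last by rewrite subn0 subnn addn0.
rewrite /Psi subn0 subnn addn0 eqxx.
by case: n hn.
Qed.
Definition Sn N := \sum_(1 <= j < N) hn N j.

Lemma FnS' N : Fn N.+2 = Fn N.+1 + 2 ^ N + Sn N.+1.
Proof. by rewrite FnS. Qed.

Lemma SnS N : Sn N.+2 = Fn N.+1 + 3 * Sn N.+1 + 2 ^ N.
Proof.
rewrite /Sn.
rewrite (eq_big_nat _ _ (F2 := fun a => (if a == 1 then 1 else 2) * hn N.+1 a.-1 + hn N.+1 a)); last first.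
  move=> a ha; rewrite hnS (_ : a == 0 = false); last lia.
  by rewrite (_ : a == N.+2 = false); last lia.
rewrite big_split /=.
have E2 : \sum_(1 <= i < N.+2) hn N.+1 i = \sum_(1 <= i < N.+1) hn N.+1 i + 2 ^ N.
  by rewrite big_nat_recr //= hn_diag.
have E1 : \sum_(1 <= i < N.+2) (if i == 1 then 1 else 2) * hn N.+1 i.-1
    = Fn N.+1 + 2 * \sum_(1 <= i < N.+1) hn N.+1 i.
  rewrite big_ltn //= mul1n hn0; congr (_ + _).
  rewrite (eq_big_nat _ _ (F2 := fun a => 2 * hn N.+1 a.-1)); last first.
    by move=> a ha; rewrite (_ : a == 1 = false); last lia.
  by rewrite -big_distrr /= big_add1 /=.
rewrite E1 E2; lia.
Qed.

Lemma Fn_rec N : Fn N.+2 + 2 * Fn N = 4 * Fn N.+1.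
Proof.
case: N => [|N]; first by rewrite FnS /= big_geq.
have h1 := FnS' N.+1.
have h2 := FnS' N.
have h3 := SnS N.
rewrite expnS in h1.
lia.
Qed.
Lemma card_count (T : finType) (P : pred T) : #|[pred x | P x]| = count P (enum T).
Proof. rewrite cardE -size_filter /enum_mem filter_predT //. Qed.

Lemma card_image_count (T : finType) (f : T -> seq nat) (S : seq (seq nat)) (P : pred (seq nat)) :
  injective f -> (forall x, f x \in S) -> size S <= #|T| ->
  #|[pred x | P (f x)]| = count P S.
Proof.
move=> fi fS hs.
have u1 : uniq (map f (enum T)) by rewrite map_inj_uniq ?enum_uniq.
have sub : {subset map f (enum T) <= S} by move=> y /mapP [x _ ->].
have hs' : size S <= size (map f (enum T)) by rewrite size_map -cardT.
have uS := leq_size_uniq u1 sub hs'.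
have [_ e] := uniq_min_size u1 sub hs'.
have hp := uniq_perm u1 uS e.
rewrite card_count -(count_map f P); by move/seq.permP: hp => ->.
Qed.

Definition adjn (a b : nat) : bool := (a.+1 == b) || (b.+1 == a).

Fixpoint seqs k : seq (seq nat) :=
  if k is k'.+1 then flatten [seq map (cons x) (seqs k') | x <- iota 0 7] else [:: [::]].

Lemma seqsS k : seqs k.+1 = flatten [seq map (cons x) (seqs k) | x <- iota 0 7].
Proof. by []. Qed.

Lemma mem_seqs k L : (L \in seqs k) = (size L == k) && all (fun x => x < 7) L.
Proof.
elim: k L => [|k IH] L; first by case: L.
rewrite seqsS; apply/flatten_mapP/idP.
  case=> x; rewrite mem_iota => hx /mapP [L' hL' ->]; rewrite IH in hL'.
  case/andP: hL' => h1 h2; rewrite /= eqSS h1 h2 andbT; lia.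
case: L => [|x L] //= /andP [hs /andP [hx ha]].
exists x; first by change (x \in iota 0 7); rewrite mem_iota.
apply: (map_f (cons x)); by rewrite IH -(eqSS (size L)) hs.
Qed.

Lemma size_seqs k : size (seqs k) = 7 ^ k.
Proof.
elim: k => [|k IH] //; rewrite seqsS size_flatten /shape -map_comp.
rewrite (eq_map (g := fun _ => 7 ^ k)); last by move=> x /=; rewrite size_map IH.
by rewrite /= expnS; lia.
Qed.

Fixpoint wk k u : nat :=
  if k is k'.+1 then (if u is u'.+1 then wk k' u' else 0) + (if u < 6 then wk k' u.+1 else 0)
  else (u == 3 : nat).

Lemma count_walk k u : u < 7 ->
  count (fun L => path adjn u L && (last u L == 3)) (seqs k) = wk k u.
Proof.
elim: k u => [|k IH] u hu; first by rewrite /= addn0; case: (u == 3).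
rewrite seqsS count_flatten -map_comp sumnE big_map.
rewrite (eq_big_seq (fun x => adjn u x * wk k x)); last first.
  move=> x; rewrite mem_iota => hx; rewrite /comp count_map -IH; last lia.
  rewrite /preim /=; case: (adjn u x); rewrite ?mul1n ?mul0n //.
  by apply/eqP; rewrite -leqn0 leqNgt -has_count; apply/hasP => -[].
rewrite /= !big_cons big_nil /adjn /=.
by do 7?[case: u hu => [|u] hu]; rewrite /= ?muln0 ?mul0n ?mul1n ?addn0 ?add0n.
Qed.
Lemma wk2_3 k : wk k.+2 3 = 2 * wk k 3 + (wk k 1 + wk k 5).
Proof. rewrite /=; lia. Qed.
Lemma wk2_15 k : wk k.+2 1 + wk k.+2 5 = 2 * (wk k 1 + wk k 5) + 2 * wk k 3.
Proof. rewrite /=; lia. Qed.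

Lemma wk_Fn m : wk (2 * m) 3 = Fn m.+1 /\ wk (2 * m).+2 3 = Fn m.+2.
Proof.
elim: m => [|m [IH1 IH2]].
  split; first by [].
  by rewrite FnS /= big_geq.
split; first by rewrite mulnS.
have h1 := wk2_3 (2 * m).
have h2 := wk2_3 (2 * m).+2.
have h3 := wk2_15 (2 * m).
have h4 := Fn_rec m.+1.
rewrite mulnS.
rewrite -[(2 * m).+4]/((2 * m).+2.+2).
lia.
Qed.

Definition toL k (w : {ffun 'I_k -> 'I_7}) : seq nat := [seq val (w i) | i <- enum 'I_k].

Lemma nth_toL k (w : {ffun 'I_k -> 'I_7}) i (hi : i < k) : nth 0 (toL w) i = w (Ordinal hi).
Proof.
rewrite /toL (nth_map (Ordinal hi)) ?size_enum_ord //.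
by congr (val (w _)); apply: val_inj; rewrite /= nth_enum_ord.
Qed.

Lemma toL_inj k : injective (@toL k).
Proof.
move=> w1 w2 e; apply/ffunP => i; apply: val_inj.
have ei : Ordinal (ltn_ord i) = i by apply: val_inj.
have := nth_toL w1 (ltn_ord i); have := nth_toL w2 (ltn_ord i).
by rewrite ei e => -> .
Qed.

Lemma toL_seqs k (w : {ffun 'I_k -> 'I_7}) : toL w \in seqs k.
Proof.
rewrite mem_seqs /toL size_map size_enum_ord eqxx /=.
by apply/allP => x /mapP [i _ ->].
Qed.

Definition Pw (L : seq nat) : bool :=
  if L is x :: L' then (x == 3) && path adjn x L' && (last x L' == 3) else false.

Lemma closed_toL l (w : {ffun 'I_l.+1 -> 'I_7}) : closed_walk_v4 w = Pw (toL w).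
Proof.
have e0 : (nat_of_ord v4 = 3) by rewrite /v4 inordK.
set L' := [seq val (w (lift ord0 i)) | i <- enum 'I_l].
have eL : toL w = val (w ord0) :: L' by rewrite /toL enum_ordSl /= -map_comp.
have sL : size L' = l by rewrite size_map size_enum_ord.
rewrite eL /= /closed_walk_v4.
have -> : (w ord0 == v4) = (val (w ord0) == 3) by rewrite -val_eqE /= e0.
have -> : (w ord_max == v4) = (last (val (w ord0)) L' == 3).
  rewrite (last_nth 0) -eL sL (nth_toL w (ltnSn l)) -val_eqE /= e0.
  by congr (val (w _) == _); apply: val_inj.
have -> : is_walk w = path adjn (val (w ord0)) L'; last first.
  by case: (path adjn _ L'); case: (val (w ord0) == 3); case: (last (val (w ord0)) L' == 3).
apply/forallP/(pathP 0).
  move=> H i; rewrite sL => hi.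
  have := H (Ordinal hi).
  rewrite -eL (nth_toL w (ltnW hi : i < l.+1)).
  have -> : nth 0 L' i = nth 0 (toL w) i.+1 by rewrite eL.
  rewrite (nth_toL w (hi : i.+1 < l.+1)) /P7_adj /adjn.
  have e1 : widen_ord (leqnSn l) (Ordinal hi) = Ordinal (ltnW hi : i < l.+1) by apply: val_inj.
  have e2 : lift ord0 (Ordinal hi) = Ordinal (hi : i.+1 < l.+1) by apply: val_inj.
  by rewrite e1 e2.
move=> H j; have := H j; rewrite sL => /(_ (ltn_ord j)).
rewrite -eL (nth_toL w (ltnW (ltn_ord j) : j < l.+1)).
have -> : nth 0 L' j = nth 0 (toL w) j.+1 by rewrite eL.
rewrite (nth_toL w ((ltn_ord j) : j.+1 < l.+1)) /P7_adj /adjn.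
have e1 : widen_ord (leqnSn l) j = Ordinal (ltnW (ltn_ord j) : j < l.+1) by apply: val_inj.
have e2 : lift ord0 j = Ordinal ((ltn_ord j) : j.+1 < l.+1) by apply: val_inj.
by rewrite e1 e2.
Qed.

Lemma walk_count l : #|[pred w : {ffun 'I_l.+1 -> 'I_7} | closed_walk_v4 w]| = wk l 3.
Proof.
rewrite (eq_card (B := [pred w | Pw (toL w)])); last by move=> w; rewrite !inE closed_toL.
rewrite (@card_image_count _ (@toL l.+1) (seqs l.+1)); last first.
- by rewrite size_seqs card_ffun !card_ord.
- exact: toL_seqs.
- exact: toL_inj.
rewrite seqsS count_flatten -map_comp sumnE big_map /= !big_cons big_nil /=.
rewrite !count_map /preim /=.
rewrite !count_pred0 -(count_walk l (_ : 3 < 7)) // !add0n addn0.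
by apply: eq_count.
Qed.

Definition toP n (s : 'S_n) : seq nat := [seq val (s i) | i <- enum 'I_n].

Lemma nth_toP n (s : 'S_n) i (hi : i < n) : nth 0 (toP s) i = s (Ordinal hi).
Proof.
rewrite /toP (nth_map (Ordinal hi)) ?size_enum_ord //.
by congr (val (s _)); apply: val_inj; rewrite /= nth_enum_ord.
Qed.

Lemma toP_inj n : injective (@toP n).
Proof.
move=> s1 s2 e; apply/permP => i; apply: val_inj.
have ei : Ordinal (ltn_ord i) = i by apply: val_inj.
have := nth_toP s1 (ltn_ord i); have := nth_toP s2 (ltn_ord i).
by rewrite ei e => -> .
Qed.

Lemma toP_orders n (s : 'S_n) : toP s \in orders (iota 0 n).
Proof.
rewrite mem_orders; apply: uniq_perm; rewrite ?iota_uniq //.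
  rewrite map_inj_uniq ?enum_uniq //; move=> i j /val_inj; exact: perm_inj.
move=> x; rewrite mem_iota add0n /=; apply/mapP/idP.
  by case=> i _ ->; rewrite ?leq0n ltn_ord.
move=> hx; exists ((s^-1)%g (Ordinal hx)); first by rewrite mem_enum.
by rewrite permKV.
Qed.

Lemma perm_count_rect n (P : pred (seq nat)) : #|[pred s : 'S_n | P (toP s)]| = count P (orders (iota 0 n)).
Proof.
apply: card_image_count; first exact: toP_inj; first exact: toP_orders.
by rewrite /orders size_orders_rec size_iota // card_Sn.
Qed.

Lemma memdrop n (s : 'S_n) t (i : 'I_n) : (val (s i) \in drop t (toP s)) = (t <= i).
Proof.
rewrite /toP -map_drop.
rewrite (mem_map (f := fun i => val (s i))); last by move=> x y /val_inj; exact: perm_inj.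
rewrite -(mem_map val_inj) map_drop val_enum_ord drop_iota mem_iota add0n.
move: (ltn_ord i) => hi; apply/idP/idP => /=; lia.
Qed.

Lemma goodCP n v : reflect (forall t, bad n (drop t v) = false) (goodC n v).
Proof.
elim: v => [|x v IH] /=.
  by rewrite bad_nil; apply: ReflectT => -[|t].
apply: (iffP andP).
  case=> /negbTE h0 /IH h t; case: t => [|t] //=; by rewrite drop0.
move=> h; split; first by rewrite -(drop0 (x :: v)) h.
by apply/IH => t; have := h t.+1.
Qed.

Definition badpos n (s : 'S_n) : Prop := exists ia ib ic id : 'I_n,
  [/\ ia < ic, ia < id, ib < ic, ib < id &
      [/\ s ic < s ia, s ia < s id & s id < s ib]].

Lemma bad_badpos n (s : 'S_n) : (exists t, bad n (drop t (toP s))) <-> badpos s.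
Proof.
split.
  case=> t /badP [c1 [a [d [b [h1 h2 h3 h4 [m1 m2 m3 m4]]]]]].
  have hc : c1 < n by lia.
  have ha : a < n by lia.
  have hd : d < n by lia.
  have ec : c1 = s ((s^-1)%g (Ordinal hc)) by rewrite permKV.
  have ea : a = s ((s^-1)%g (Ordinal ha)) by rewrite permKV.
  have ed : d = s ((s^-1)%g (Ordinal hd)) by rewrite permKV.
  have eb : b = s ((s^-1)%g (Ordinal h4)) by rewrite permKV.
  rewrite ec memdrop in m1; rewrite ea memdrop in m2; rewrite ed memdrop in m3; rewrite eb memdrop in m4.
  exists ((s^-1)%g (Ordinal ha)), ((s^-1)%g (Ordinal h4)), ((s^-1)%g (Ordinal hc)), ((s^-1)%g (Ordinal hd)).
  rewrite -ltnNge in m2; rewrite -ltnNge in m4.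
  rewrite !permKV /=; split.
  - exact: leq_trans m2 m1.
  - exact: leq_trans m2 m3.
  - exact: leq_trans m4 m1.
  - exact: leq_trans m4 m3.
  - by split.
case=> ia [ib [ic [id [h1 h2 h3 h4 [v1 v2 v3]]]]].
exists (minn ic id); apply/badP; exists (s ic), (s ia), (s id), (s ib).
rewrite !memdrop; split => //.
by rewrite geq_minl geq_minr -!ltnNge !leq_min h1 h2 h3 h4.
Qed.

Lemma contains_of n (s : 'S_n) (p : seq nat) (g : 'I_(size p) -> 'I_n) :
  (forall a b : 'I_(size p), a < b -> g a < g b) ->
  (forall a b : 'I_(size p), (s (g a) < s (g b)) = (nth 0 p a < nth 0 p b)) ->
  contains_pattern s p.
Proof.
move=> h1 h2; apply/existsP; exists (finfun g); apply/andP; split;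
  apply/forallP => a; apply/forallP => b; rewrite !ffunE.
  by apply/implyP; exact: h1.
by rewrite h2.
Qed.

Lemma contains_to n (s : 'S_n) p : contains_pattern s p ->
  exists g : 'I_(size p) -> 'I_n, (forall a b : 'I_(size p), a < b -> g a < g b) /\
    (forall a b : 'I_(size p), (s (g a) < s (g b)) = (nth 0 p a < nth 0 p b)).
Proof.
case/existsP => f /andP [/forallP h1 /forallP h2]; exists f; split.
  by move=> a b; move/forallP: (h1 a) => /(_ b) /implyP.
by move=> a b; move/forallP: (h2 a) => /(_ b) /eqP.
Qed.

Ltac bcase := try move=> _; apply/idP/idP; lia.

Ltac try4 s ia ib ic i4 :=
  first
  [ (apply/or4P; apply: Or41;
     apply: (@contains_of _ s [:: 2; 4; 1; 3] (fun k : 'I_4 => nth ia [:: ia; ib; ic; i4] k));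
     move=> [[|[|[|[|?]]]] ?] [[|[|[|[|?]]]] ?] //=; bcase)
  | (apply/or4P; apply: Or42;
     apply: (@contains_of _ s [:: 2; 4; 3; 1] (fun k : 'I_4 => nth ia [:: ia; ib; i4; ic] k));
     move=> [[|[|[|[|?]]]] ?] [[|[|[|[|?]]]] ?] //=; bcase)
  | (apply/or4P; apply: Or43;
     apply: (@contains_of _ s [:: 4; 2; 1; 3] (fun k : 'I_4 => nth ia [:: ib; ia; ic; i4] k));
     move=> [[|[|[|[|?]]]] ?] [[|[|[|[|?]]]] ?] //=; bcase)
  | (apply/or4P; apply: Or44;
     apply: (@contains_of _ s [:: 4; 2; 3; 1] (fun k : 'I_4 => nth ia [:: ib; ia; i4; ic] k));
     move=> [[|[|[|[|?]]]] ?] [[|[|[|[|?]]]] ?] //=; bcase) ].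

Lemma badpos_contains n (s : 'S_n) : badpos s ->
  [|| contains_pattern s [:: 2; 4; 1; 3], contains_pattern s [:: 2; 4; 3; 1],
      contains_pattern s [:: 4; 2; 1; 3] | contains_pattern s [:: 4; 2; 3; 1]].
Proof.
case=> ia [ib [ic [i4 [h1 h2 h3 h4 [v1 v2 v3]]]]].
case: (ltngtP ia ib) => hab; last first.
  by move: (val_inj hab) => e; subst; move: (ltn_trans v2 v3); rewrite ltnn.
all: case: (ltngtP ic i4) => hcd; last first.
all: try by move: (val_inj hcd) => e; subst; move: (ltn_trans v1 v2); rewrite ltnn.
all: try4 s ia ib ic i4.
Qed.
Ltac getpos g H1 H2 ia ib ic i4 :=
  exists (g ia), (g ib), (g ic), (g i4); split;
  [ by apply: H1 | by apply: H1 | by apply: H1 | by apply: H1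
  | split; by rewrite H2 ].

Lemma notrect_badpos n (s : 'S_n) : ~~ rectangular s -> badpos s.
Proof.
rewrite /rectangular /avoids -!negb_or negbK.
have o0 : 0 < 4 by []. have o1 : 1 < 4 by []. have o2 : 2 < 4 by []. have o3 : 3 < 4 by [].
case/or4P => /contains_to [g [H1 H2]].
- getpos g H1 H2 (Ordinal o0) (Ordinal o1) (Ordinal o2) (Ordinal o3).
- getpos g H1 H2 (Ordinal o0) (Ordinal o1) (Ordinal o3) (Ordinal o2).
- getpos g H1 H2 (Ordinal o1) (Ordinal o0) (Ordinal o2) (Ordinal o3).
- getpos g H1 H2 (Ordinal o1) (Ordinal o0) (Ordinal o3) (Ordinal o2).
Qed.

Lemma rect_goodC n (s : 'S_n) : rectangular s = goodC n (toP s).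
Proof.
apply/idP/idP.
  move=> hr; apply/goodCP => t; apply/negbTE/negP => hb.
  have bp := (bad_badpos s).1 (ex_intro _ t hb).
  by move: hr; apply/negP; rewrite /rectangular /avoids -!negb_or negbK; apply: badpos_contains.
move=> hg; apply/negPn/negP => /notrect_badpos /(bad_badpos s) [t].
by rewrite (goodCP _ _ hg t).
Qed.

Lemma rect_count n : 1 <= n -> #|[pred s : 'S_n | rectangular s]| = Fn n.
Proof.
move=> hn.
rewrite (eq_card (B := [pred s : 'S_n | goodC n (toP s)])); last by move=> s; rewrite !inE rect_goodC.
by rewrite perm_count_rect -cnt_iota.
Qed.
Lemma card_bij (T1 T2 : finType) : #|T1| = #|T2| -> exists f : T1 -> T2, bijective f.
Proof.
move=> e.
exists (fun x => enum_val (cast_ord e (enum_rank x))).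
exists (fun y => enum_val (cast_ord (esym e) (enum_rank y))).
  by move=> x; rewrite enum_valK cast_ordK enum_rankK.
by move=> y; rewrite enum_valK cast_ordKV enum_rankK.
Qed.

Theorem theorem8p1 (n : nat) (hn : 1 <= n) :
  exists f : {w : {ffun 'I_(2 * n - 2).+1 -> 'I_7} | closed_walk_v4 w} ->
             {s : 'S_n | rectangular s},
    bijective f.
Proof.
apply: card_bij; rewrite !card_sig.
rewrite walk_count rect_count //.
case: n hn => // m _.
rewrite (_ : 2 * m.+1 - 2 = 2 * m); last lia.
by case: (wk_Fn m).
Qed.
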